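(* If $\lambda$ is a panmagic permutation of $\Omega_m$ and $\rho$ is a panmagic permutation of $\Omega_n$, then the permutation $\lambda\,\dot\times\,\rho$ of $\Omega_{mn}$ defined by $(\lambda\,\dot\times\,\rho)(jn+s)=\lambda(j)\,n+\rho(s)$ for $j\in\Omega_m$, $s\in\Omega_n$, is panmagic.
   Context: $\Omega_n=\{0,1,\dots,n-1\}$. A permutation $\pi$ of $\Omega_n$ is panmagic if its permutation matrix $P_\pi$ (with $(i,j)$ entry $1$ if $i=\pi(j)$ and $0$ otherwise) is panmagic, i.e. the sums of its entries along all rows, all columns, all upward diagonals $\{(i,j): i+j\equiv k \pmod n\}$ and all downward diagonals $\{(i,j): i-j\equiv k\pmod n\}$, $k\in\Omega_n$, are equal; equivalently, the maps $j\mapsto\pi(j)-j$ and $j\mapsto\pi(j)+j$ modulo $n$ are bijections of $\Omega_n$. *)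

(* Defs.v *)
From mathcomp Require Import all_boot all_order all_algebra all_fingroup.
Set Implicit Arguments. Unset Strict Implicit. Unset Printing Implicit Defensive.

(* Omega_n is 'I_n ; permutations of Omega_n are {perm 'I_n}. *)

Definition pmx n (pi : {perm 'I_n}) (i j : 'I_n) : nat := (i == pi j).

(* panmagic matrix: all row, column, upward-diagonal (i+j = k mod n) and
   downward-diagonal (i-j = k mod n) sums are equal to one common value. *)
Definition panmagic_mx n (A : 'I_n -> 'I_n -> nat) : Prop :=
  exists c : nat,
    (forall i : 'I_n, \sum_(j < n) A i j = c) /\
    (forall j : 'I_n, \sum_(i < n) A i j = c) /\
    (forall k : 'I_n, \sum_(i < n) \sum_(j < n | (i + j) %% n == k) A i j = c) /\
    (forall k : 'I_n, \sum_(i < n) \sum_(j < n | (i + (n - j)) %% n == k) A i j = c).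

Definition panmagic n (pi : {perm 'I_n}) : Prop := panmagic_mx (pmx pi).

(* the product permutation: (lam .x rho)(j n + s) = lam(j) n + rho(s),
   where x = j n + s with j = x %/ n < m and s = x %% n < n. *)
Lemma pos_of_ord m n (x : 'I_(m * n)) : (0 < n)%N /\ (0 < m)%N.
Proof. by case: x => x /=; case: m => [|m]; case: n => [|n] //; rewrite ?muln0. Qed.

Lemma div_lt m n (x : 'I_(m * n)) : (x %/ n < m)%N.
Proof. have [n0 _] := pos_of_ord x; by rewrite ltn_divLR. Qed.

Lemma mod_lt m n (x : 'I_(m * n)) : (x %% n < n)%N.
Proof. have [n0 _] := pos_of_ord x; by rewrite ltn_mod. Qed.

Definition ordq m n (x : 'I_(m * n)) : 'I_m := Ordinal (div_lt x).
Definition ordr m n (x : 'I_(m * n)) : 'I_n := Ordinal (mod_lt x).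

Lemma prod_perm_lt m n (lam : {perm 'I_m}) (rho : {perm 'I_n}) (x : 'I_(m * n)) :
  (lam (ordq x) * n + rho (ordr x) < m * n)%N.
Proof.
apply: (@leq_trans ((lam (ordq x)).+1 * n)); last by rewrite leq_mul2r ltn_ord orbT.
by rewrite mulSn addnC ltn_add2r.
Qed.

Definition prod_fun m n (lam : {perm 'I_m}) (rho : {perm 'I_n})
  (x : 'I_(m * n)) : 'I_(m * n) := Ordinal (prod_perm_lt lam rho x).

Lemma prod_fun_inj m n (lam : {perm 'I_m}) (rho : {perm 'I_n}) :
  injective (prod_fun lam rho).
Proof.
move=> x y /(congr1 val) /= E.
have [n0 _] := pos_of_ord x.
have E1 := congr1 (divn^~ n) E; have E2 := congr1 (modn^~ n) E.
rewrite !divnMDl // !divn_small ?ltn_ord // !addn0 in E1.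
rewrite !modnMDl !modn_small ?ltn_ord // in E2.
move/val_inj/perm_inj: E1 => E1; move/val_inj/perm_inj: E2 => E2.
have e1 := congr1 val E1; have e2 := congr1 val E2; simpl in e1, e2.
by apply: val_inj; rewrite /= (divn_eq x n) (divn_eq y n) e1 e2.
Qed.

Definition prod_perm m n (lam : {perm 'I_m}) (rho : {perm 'I_n}) : {perm 'I_(m * n)} :=
  perm (@prod_fun_inj m n lam rho).

Lemma prod_permE m n (lam : {perm 'I_m}) (rho : {perm 'I_n}) (j : 'I_m) (s : 'I_n)
  (x : 'I_(m * n)) : val x = (j * n + s)%N ->
  val (prod_perm lam rho x) = (lam j * n + rho s)%N.
Proof.
move=> hx; rewrite /prod_perm permE /=.
have [n0 _] := pos_of_ord x.
have -> : ordq x = j by apply: val_inj; rewrite /= hx divnMDl // divn_small ?addn0.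
have -> : ordr x = s by apply: val_inj; rewrite /= hx modnMDl modn_small.
by [].
Qed.

(* Main.v *)
Require Import Defs.
From mathcomp Require Import all_boot all_order all_algebra all_fingroup.
From mathcomp Require Import zify.
Set Implicit Arguments. Unset Strict Implicit. Unset Printing Implicit Defensive.

Definition sumc {n} (pi : {perm 'I_n}) :=
  forall x y : 'I_n, pi x + x = pi y + y %[mod n] -> x = y.
Definition difc {n} (pi : {perm 'I_n}) :=
  forall x y : 'I_n, pi x + y = pi y + x %[mod n] -> x = y.

Lemma row_sum n (pi : {perm 'I_n}) (i : 'I_n) : \sum_(j < n) pmx pi i j = 1.
Proof.
rewrite (bigD1 ((pi^-1)%g i)) //= /pmx permKV eqxx big1 // => j Hj.
case: eqP => // E; move: Hj; by rewrite E permK eqxx.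
Qed.

Lemma col_sum n (pi : {perm 'I_n}) (j : 'I_n) : \sum_(i < n) pmx pi i j = 1.
Proof.
rewrite (bigD1 (pi j)) //= /pmx eqxx big1 // => i Hi.
by rewrite (negbTE Hi).
Qed.

Lemma diag_count n (pi : {perm 'I_n}) (P : nat -> nat -> bool) :
  \sum_(i < n) \sum_(j < n | P i j) pmx pi i j = \sum_(j < n) (P (pi j) j : nat).
Proof.
under eq_bigr do rewrite big_mkcond.
rewrite exchange_big; apply: eq_bigr => j _ /=.
rewrite (bigD1 (pi j)) //= /pmx eqxx big1 => [|i Hi].
  by case: (P _ _); rewrite addn0.
by rewrite (negbTE Hi); case: (P _ _).
Qed.

Lemma diag_up n (pi : {perm 'I_n}) (k : nat) :
  \sum_(i < n) \sum_(j < n | (i + j) %% n == k) pmx pi i j =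
  \sum_(j < n) ((pi j + j) %% n == k : nat).
Proof. exact: (diag_count pi (fun i j => (i + j) %% n == k)). Qed.

Lemma diag_dn n (pi : {perm 'I_n}) (k : nat) :
  \sum_(i < n) \sum_(j < n | (i + (n - j)) %% n == k) pmx pi i j =
  \sum_(j < n) ((pi j + (n - j)) %% n == k : nat).
Proof. exact: (diag_count pi (fun i j => (i + (n - j)) %% n == k)). Qed.

Lemma count_inj n (f : 'I_n -> nat) (Hf : forall j, f j < n) :
  (forall x y, f x = f y -> x = y) ->
  forall k : 'I_n, \sum_(j < n) (f j == k : nat) = 1.
Proof.
move=> finj k.
pose F j := Ordinal (Hf j).
have Finj : injective F by move=> x y /(congr1 val) /= /finj.
pose p := perm Finj.
have Hk : f ((p^-1)%g k) = k.
  have := congr1 val (permKV p k); by rewrite [in X in val X = _]permE.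
rewrite (bigD1 ((p^-1)%g k)) //= Hk eqxx big1 // => j Hj.
case: eqP => // E; move: Hj; rewrite -Hk in E; by rewrite (finj _ _ E) eqxx.
Qed.

Lemma diff_mod n pu pv u v : u <= n -> v <= n ->
  (pu + (n - u) == pv + (n - v) %[mod n]) = (pu + v == pv + u %[mod n]).
Proof.
move=> hu hv; rewrite -(eqn_modDr (u + v)).
have -> : pu + (n - u) + (u + v) = (pu + v) + n by lia.
have -> : pv + (n - v) + (u + v) = (pv + u) + n by lia.
by rewrite !modnDr.
Qed.

Lemma to_pan n (pi : {perm 'I_n}) : sumc pi -> difc pi -> panmagic pi.
Proof.
move=> hs hd; exists 1; split; [|split; [|split]].
- exact: row_sum.
- exact: col_sum.
- move=> k; rewrite diag_up.
  have n0 : 0 < n by apply: leq_ltn_trans (leq0n k) (ltn_ord k).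
  apply: (count_inj (f := fun j => (pi j + j) %% n)).
    by move=> j; rewrite ltn_mod.
  exact: hs.
- move=> k; rewrite diag_dn.
  have n0 : 0 < n by apply: leq_ltn_trans (leq0n k) (ltn_ord k).
  apply: (count_inj (f := fun j => (pi j + (n - j)) %% n)).
    by move=> j; rewrite ltn_mod.
  move=> x y E; apply: hd; apply/eqP; rewrite -(@diff_mod n (pi x) (pi y) x y (ltnW (ltn_ord x)) (ltnW (ltn_ord y))); exact/eqP.
Qed.

Lemma two_contra n (f : 'I_n -> nat) (k : nat) (x y : 'I_n) :
  \sum_(j < n) (f j == k : nat) = 1 -> f x = k -> f y = k -> x = y.
Proof.
move=> S fx fy; case: (eqVneq x y) => // nxy; exfalso.
move: S; rewrite (bigD1 x) //= (bigD1 y) /=; last by rewrite eq_sym.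
by rewrite fx fy eqxx.
Qed.

Lemma from_pan n (pi : {perm 'I_n}) : 0 < n -> panmagic pi -> sumc pi /\ difc pi.
Proof.
move=> n0 [c [hr [_ [hs hd]]]].
have c1 : c = 1 by rewrite -(hr (Ordinal n0)) row_sum.
subst c; split.
- move=> x y E.
  have := hs (Ordinal (ltn_pmod (pi x + x) n0)).
  rewrite diag_up => S.
  exact: (two_contra S).
- move=> x y E.
  have := hd (Ordinal (ltn_pmod (pi x + (n - x)) n0)).
  rewrite diag_dn => S.
  apply: (two_contra S) => //=.
  apply/eqP; rewrite eq_sym (@diff_mod n (pi x) (pi y) x y (ltnW (ltn_ord x)) (ltnW (ltn_ord y))); exact/eqP.
Qed.

Lemma core1 m n a c a' c' :
  a * n + c = a' * n + c' %[mod m * n] -> c = c' %[mod n].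
Proof.
move=> H; have := congr1 (modn^~ n) H; rewrite /= !modn_dvdm ?dvdn_mull //.
by rewrite !modnMDl.
Qed.

Lemma core2 m n a a' c : 0 < n ->
  a * n + c = a' * n + c %[mod m * n] -> a = a' %[mod m].
Proof.
move=> n0 /eqP; rewrite eqn_modDr -!muln_modl // eqn_pmul2r //; exact/eqP.
Qed.

Lemma prod_val m n (lam : {perm 'I_m}) (rho : {perm 'I_n}) (x : 'I_(m * n)) :
  val (prod_perm lam rho x) = lam (ordq x) * n + rho (ordr x).
Proof. by apply: prod_permE; exact: divn_eq. Qed.

Lemma ord_eq m n (x y : 'I_(m * n)) : ordq x = ordq y -> ordr x = ordr y -> x = y.
Proof.
move=> /(congr1 val) /= e1 /(congr1 val) /= e2.
by apply: val_inj; rewrite /= (divn_eq x n) (divn_eq y n) e1 e2.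
Qed.

Theorem corollary3p2 (m n : nat) (lam : {perm 'I_m}) (rho : {perm 'I_n}) :
  panmagic lam -> panmagic rho -> panmagic (prod_perm lam rho).
Proof.
move=> pl pr; apply: to_pan.
- move=> x y; have [n0 m0] := pos_of_ord x.
  have [sl _] := from_pan m0 pl; have [sr _] := from_pan n0 pr.
  have hx : (x : nat) = ordq x * n + ordr x := divn_eq x n.
  have hy : (y : nat) = ordq y * n + ordr y := divn_eq y n.
  move: (prod_val lam rho x) (prod_val lam rho y) => px py.
  rewrite px py hx hy => H.
  have H' : (lam (ordq x) + ordq x) * n + (rho (ordr x) + ordr x) =
       (lam (ordq y) + ordq y) * n + (rho (ordr y) + ordr y) %[mod m * n].
    have -> : (lam (ordq x) + ordq x) * n + (rho (ordr x) + ordr x) =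
       lam (ordq x) * n + rho (ordr x) + (ordq x * n + ordr x) by nia.
    have -> : (lam (ordq y) + ordq y) * n + (rho (ordr y) + ordr y) =
       lam (ordq y) * n + rho (ordr y) + (ordq y * n + ordr y) by nia.
    exact: H.
  have e2 := sr _ _ (core1 H'). rewrite e2 in H'.
  exact: ord_eq (sl _ _ (core2 n0 H')) e2.
- move=> x y; have [n0 m0] := pos_of_ord x.
  have [_ dl] := from_pan m0 pl; have [_ dr] := from_pan n0 pr.
  have hx : (x : nat) = ordq x * n + ordr x := divn_eq x n.
  have hy : (y : nat) = ordq y * n + ordr y := divn_eq y n.
  move: (prod_val lam rho x) (prod_val lam rho y) => px py.
  rewrite px py hx hy => H.
  have H' : (lam (ordq x) + ordq y) * n + (rho (ordr x) + ordr y) =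
       (lam (ordq y) + ordq x) * n + (rho (ordr y) + ordr x) %[mod m * n].
    have -> : (lam (ordq x) + ordq y) * n + (rho (ordr x) + ordr y) =
       lam (ordq x) * n + rho (ordr x) + (ordq y * n + ordr y) by nia.
    have -> : (lam (ordq y) + ordq x) * n + (rho (ordr y) + ordr x) =
       lam (ordq y) * n + rho (ordr y) + (ordq x * n + ordr x) by nia.
    exact: H.
  have e2 := dr _ _ (core1 H'). rewrite e2 in H'.
  exact: ord_eq (dl _ _ (core2 n0 H')) e2.
Qed.
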